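(* For every positive integer $n$, $$\frac{n^2(n^2-1)}{6}\ \Big|\ \sum_{k=0}^{n-1}k(k+1)(8k+9)T_kT_{k+1}.$$
   Context: For $n\in\mathbb{N}$, the central trinomial coefficient $T_n$ is the constant term of $(1+x+x^{-1})^n$, i.e. $T_n=\sum_{k=0}^{\lfloor n/2\rfloor}\binom{n}{2k}\binom{2k}{k}$. Divisibility $a\mid m$ for integers means $m=ac$ for some integer $c$ (so $0\mid m$ means $m=0$). *)

(* Defs.v *)
From mathcomp Require Import all_boot.
Set Implicit Arguments. Unset Strict Implicit. Unset Printing Implicit Defensive.

Definition T (n : nat) : nat :=
  \sum_(0 <= k < n./2.+1) 'C(n, k.*2) * 'C(k.*2, k).

(* Main.v *)
Require Import Defs.
From mathcomp Require Import all_boot.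
From mathcomp Require Import all_order all_algebra.
From mathcomp Require Import ring zify.
Import GRing.Theory Num.Theory.
Definition tt (n k : nat) : nat := 'C(n, k.*2) * 'C(k.*2, k).

Lemma cbin_step j : (j+1) * 'C((j.*2).+2, j.+1) = 2 * (2*j+1) * 'C(j.*2, j).
Proof.
  have h1 := mul_bin_diag (j.*2).+2 j.
  have h2 := mul_bin_diag (j.*2).+1 j.
  have h3 : 'C((j.*2).+1, j.+1) = 'C((j.*2).+1, j).
    rewrite -bin_sub; last by lia.
    congr 'C(_, _); lia.
  simpl in h1, h2.
  rewrite h3 in h2.
  move: h1 h2; set C' := 'C(_, j); set D := 'C(_, j.+1); set d := 'C(_, j) => h1 h2.
  have jp : 0 < j+1 by lia.
  apply/eqP; rewrite -(eqn_pmul2l jp); apply/eqP.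
  have -> : (j + 1) * ((j + 1) * D) = (j+1) * (j.+1 * D) by ring.
  rewrite -h1.
  have -> : (j + 1) * ((j.*2).+2 * C') = 2 * (j+1) * (j.+1 * C') by rewrite -(muln2 j); ring.
  rewrite -h2 -(muln2 j); ring.
Qed.

Lemma tt_term (n j : nat) :
  (n+2) * tt (n+2) j.+1 + (n+1) * tt n j.+1 = (2*n+3) * tt (n+1) j.+1 + 4*(n+1) * tt n j.
Proof.
rewrite /tt.
have -> : j.+1.*2 = (j.*2).+2 by rewrite doubleS.
have A6 := cbin_step j.
case: (ltnP n j.*2) => hn.
  rewrite (@bin_small n) ?(@bin_small n) ?(@bin_small (n+1)) ?(@bin_small (n+2)); try lia.
have [m ->] : exists m, n = j.*2 + m by exists (n - j.*2); rewrite subnKC.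
have A1 := mul_bin_diag (j.*2 + m + 2) (j.*2).+1.
have A2 := mul_bin_diag (j.*2 + m + 1) (j.*2).
have A3 := mul_bin_left (j.*2 + m + 1) (j.*2).+1.
have A4 := mul_bin_left (j.*2 + m) (j.*2).+1.
have A5 := mul_bin_left (j.*2 + m) (j.*2).
have E1 : (j.*2 + m + 2).-1 = j.*2 + m + 1 by lia. rewrite E1 in A1.
have E2 : (j.*2 + m + 1).-1 = j.*2 + m by lia. rewrite E2 in A2.
have E3 : j.*2 + m + 1 - (j.*2).+1 = m by lia. rewrite E3 in A3.
have E4 : j.*2 + m - (j.*2).+1 = m.-1 by lia. rewrite E4 in A4.
have E5 : j.*2 + m - (j.*2) = m by lia. rewrite E5 in A5.
move: A1 A2 A3 A4 A5 A6.
set X := 'C(j.*2 + m + 2, _); set W := 'C(j.*2 + m + 1, (j.*2).+1);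
set Y := 'C(j.*2 + m + 1, _); set Z := 'C(j.*2 + m, (j.*2).+2);
set V := 'C(j.*2 + m, (j.*2).+1); set c := 'C(j.*2 + m, j.*2);
set D := 'C((j.*2).+2, _); set d := 'C(j.*2, j).
rewrite -!(muln2 j).
move=> A1 A2 A3 A4 A5 A6.
clearbody X W Y Z V c D d.
have K0 : 0 < (j*2).+2 * (j*2).+1 * (j+1) by lia.
apply/eqP; rewrite -(eqn_pmul2l K0); apply/eqP.
rewrite !(mulnDr ((j*2).+2 * (j*2).+1 * (j+1))).
have L1 : (j*2).+2 * (j*2).+1 * (j+1) * ((j*2+m+2)*(X*D)) = 2*(2*j+1)*(j*2+m+2)*(j*2+m+2)*(j*2+m+1)*c*d.
  transitivity ((j*2).+1*(j*2+m+2)*((j*2).+2*X)*((j+1)*D)); first ring.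
  rewrite -A1 A6.
  transitivity (2*(2*j+1)*(j*2+m+2)*(j*2+m+2)*((j*2).+1*W)*d); first ring.
  rewrite -A2; ring.
have L2 : (j*2).+2 * (j*2).+1 * (j+1) * ((j*2+m+1)*(Z*D)) = 2*(2*j+1)*(j*2+m+1)* m.-1 * m * c*d.
  transitivity ((j*2).+1*(j*2+m+1)*((j*2).+2*Z)*((j+1)*D)); first ring.
  rewrite A4 A6.
  transitivity (2*(2*j+1)*(j*2+m+1)* m.-1 * ((j*2).+1*V)*d); first ring.
  rewrite A5; ring.
have L3 : (j*2).+2 * (j*2).+1 * (j+1) * ((2*(j*2+m)+3)*(Y*D)) = 2*(2*j+1)*(2*(j*2+m)+3) * m * (j*2+m+1)*c*d.
  transitivity ((j*2).+1*(2*(j*2+m)+3)*((j*2).+2*Y)*((j+1)*D)); first ring.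
  rewrite A3 A6.
  transitivity (2*(2*j+1)*(2*(j*2+m)+3) * m * ((j*2).+1*W)*d); first ring.
  rewrite -A2; ring.
rewrite L1 L2 L3.
case: m {A1 A2 A3 A4 A5 L1 L2 L3 E1 E2 E3 E4 E5 hn} => [|m] /=; ring.
Qed.

Lemma T_sum n N : n./2 < N -> T n = \sum_(0 <= k < N) tt n k.
Proof.
move=> hN; rewrite /T (@big_cat_nat _ _ _ n./2.+1 0 N) //=.
rewrite [X in _ = _ + X]big1_seq ?addn0 // => k /andP[_].
rewrite mem_index_iota => /andP[hk _]; rewrite /tt bin_small ?mul0n //.
by rewrite -ltn_half_double.
Qed.

Lemma T_rec n : (n+2) * T (n+2) = (2*n+3) * T (n+1) + 3*(n+1) * T n.
Proof.
have key : (n+2) * T (n+2) + (n+1) * T n = (2*n+3) * T (n+1) + 4*(n+1) * T n.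
  rewrite (T_sum (n+2) ((n+2).+1)); last by rewrite ltnS -divn2; apply: leq_div.
  rewrite (T_sum (n+1) ((n+2).+1)); last by rewrite ltnS -divn2; apply: leq_trans (leq_div _ _) _; lia.
  rewrite [in LHS](T_sum (n) ((n+2).+1)); last by rewrite ltnS -divn2; apply: leq_trans (leq_div _ _) _; lia.
  rewrite [in RHS](T_sum (n) ((n+2))); last by rewrite -divn2; apply: leq_ltn_trans (leq_div _ _) _; lia.
  rewrite !big_nat_recl //= /tt !bin0 !mul1n.
  rewrite !mulnDr !big_distrr /=.
  have -> : (n + 2) * 1 + \sum_(0 <= i < n + 2) (n + 2) * ('C(n + 2, i.+1.*2) * 'C(i.+1.*2, i.+1)) +
    ((n + 1) * 1 + \sum_(0 <= i < n + 2) (n + 1) * ('C(n, i.+1.*2) * 'C(i.+1.*2, i.+1)))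
    = (2*n+3) + \sum_(0 <= i < n + 2) ((n + 2) * tt (n+2) i.+1 + (n + 1) * tt n i.+1).
    rewrite big_split /= /tt; lia.
  rewrite (eq_bigr _ (fun i _ => tt_term n i)) big_split /= -!big_distrr /= /tt.
  ring.
lia.
Qed.

Lemma cbin_even j : 'C((j.*2).+2, j.+1) = 2 * 'C((j.*2).+1, j).
Proof.
have h3 : 'C((j.*2).+1, j.+1) = 'C((j.*2).+1, j).
  rewrite -bin_sub; last by lia.
  congr 'C(_, _); lia.
by rewrite binS h3 addnn -muln2 mulnC.
Qed.

Lemma T_half n : exists X, T n = 1 + 2 * X.
Proof.
rewrite /T big_nat_recl //= double0 !bin0 mul1n.
exists (\sum_(0 <= i < n./2) 'C(n, i.+1.*2) * 'C(i.*2.+1, i)).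
rewrite big_distrr /=; congr (_ + _); apply: eq_bigr => i _.
by rewrite doubleS cbin_even; ring.
Qed.

Local Open Scope ring_scope.

Definition t (k : nat) : int := (T k)%:Z.

Lemma t0 : t 0 = 1. Proof. by rewrite /t /T big_nat1. Qed.
Lemma t1 : t 1 = 1. Proof. by rewrite /t /T big_nat1. Qed.

Lemma t_rec (k : nat) : (k%:Z+2) * t k.+2 = (2*k%:Z+3) * t k.+1 + 3*(k%:Z+1) * t k.
Proof. rewrite /t; have := T_rec k; rewrite !addn2 !addn1; lia. Qed.

Lemma t_rec' (k : nat) : (k%:Z+1) * t k.+1 = (2*k%:Z+1) * t k + 3*k%:Z * t k.-1.
Proof.
case: k => [|k]; first by rewrite t0 t1; lia.
have := t_rec k; rewrite /=; lia.
Qed.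

Lemma t_odd j : exists o : int, t j = 2*o + 1.
Proof. have [X HX] := T_half j; exists X%:Z; rewrite /t HX; lia. Qed.

Lemma v_even k : exists w : int, 2 * t k + 3 * t k.-1 - t k.+1 = 2 * w.
Proof.
have [o1 ->] := t_odd k.-1; have [o2 ->] := t_odd k.+1.
exists (t k + 3*o1 - o2 + 1); ring.
Qed.

Definition E (N a b : int) : int :=
  6*(4*N^+2+20*N-21)*a*b - (2*N-5)^+2*a^+2 - 9*(2*N-3)^+2*b^+2.

Definition Sz (n : nat) : int :=
  \sum_(0 <= k < n) (k%:Z * (k%:Z+1) * (8*k%:Z+9)) * t k * t k.+1.

Lemma SzS n : Sz n.+1 = Sz n + (n%:Z * (n%:Z+1) * (8*n%:Z+9)) * t n * t n.+1.
Proof. by rewrite /Sz big_nat_recr. Qed.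

Lemma PoszS n : Posz n.+1 = n%:Z + 1.
Proof. by rewrite -addn1 PoszD. Qed.

Lemma Sz_closed n : 24 * Sz n.+1 = (n%:Z+1)^+2 * E (n%:Z+1) (t n.+1) (t n).
Proof.
elim: n => [|n IH].
  rewrite SzS /Sz big_geq // t0 t1 /E; lia.
rewrite SzS mulrDr IH PoszS.
have r := t_rec n.
move: r; set N := n%:Z; set a := t n.+1; set b := t n; set c := t n.+2 => r.
apply/eqP; rewrite -subr_eq0; apply/eqP.
transitivity (- (((N+2)*c - ((2*N+3)*a + 3*(N+1)*b)) *
   ((9+52*N+68*N^+2+16*N^+3)*a + (-3+9*N-12*N^+3)*b + (-2+7*N-4*N^+2-4*N^+3)*c))).
  rewrite /E; ring.
by rewrite r subrr mul0r oppr0.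
Qed.

Definition H (N w1 w2 : int) : int :=
  -9*(2*N-1)*(N-1)*w1^+2 + 6*(2*N+5)*(N-1)*w1*w2 - (2*N-29)*(N+1)*w2^+2.

Lemma par_even (q w0 w1 w2 : int) :
  (2*q+3)*w2 - (4*q+3)*w1 - 6*q*w0 = 0 -> exists h, H (2*q+2) w1 w2 = 2*h.
Proof.
move=> Hm.
set z := q*w1 + 3*q*w0 - (q+1)*(w2-w1).
have Hw : w2 = w1 + 2*z by rewrite /z; lia.
exists ((150)*z*z + (204)*w1*z + (51)*w1*w1 + (76)*q*z*z + (208)*q*w1*z + (40)*q*w1*w1
  + (-16)*q*q*z*z + (32)*q*q*w1*z + (-16)*q*q*w1*w1).
rewrite Hw /H; ring.
Qed.

Lemma par_odd (q w1 w2 : int) : exists h, H (2*q+3) w1 w2 = 2*h.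
Proof.
exists ((46)*w2*w2 + (66)*w1*w2 + (-45)*w1*w1 + (15)*q*w2*w2 + (90)*q*w1*w2
  + (-81)*q*w1*w1 + (-4)*q*q*w2*w2 + (24)*q*q*w1*w2 + (-36)*q*q*w1*w1).
rewrite /H; ring.
Qed.

Lemma binC3 p : ('C(p.+3, 3) * 6 = p.+3 * p.+2 * p.+1)%N.
Proof. by rewrite (_ : 6 = 3`!)%N // bin_ffact !ffactnS ffactn0 /=; ring. Qed.

Lemma main_p p : exists h : int, Sz p.+2 = (p.+2 * 'C(p.+3, 3))%N%:Z * h.
Proof.
have I := Sz_closed p.+1.
rewrite !PoszS in I.
have r0 := t_rec p; have r1 := t_rec p.+1; have r2 := t_rec' p.
rewrite !PoszS in r1.
have [w0 Hw0] := v_even p.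
have [w1 Hw1] := v_even p.+1.
have [w2 Hw2] := v_even p.+2.
rewrite /= in Hw1 Hw2.
move: I r0 r1 r2 Hw0 Hw1 Hw2.
set P := p%:Z; set a := t p.+2; set b := t p.+1; set d := t p; set c := t p.+3; set e := t p.-1.
move=> I r0 r1 r2 Hw0 Hw1 Hw2.
have X : a - b = (P+1)*(2*w1) by rewrite -Hw1; lia.
have Y : a + 3*b = (P+3)*(2*w2) by rewrite -Hw2; lia.
have Mot : (P+3)*w2 - (2*P+3)*w1 - 3*P*w0 = 0 by lia.
have E2 : 2 * E (P+1+1) a b = 4*(P+1)*(P+3) * H (P+2) w1 w2.
  transitivity (-9*(2*(P+2)-1)*(P+3)*(a-b)^+2 + 6*(2*(P+2)+5)*(P+1)*(a-b)*(a+3*b)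
     - (2*(P+2)-29)*(P+1)*(a+3*b)^+2).
    rewrite /E; ring.
  rewrite X Y /H; ring.
have [h Hh] : exists h, H (P+2) w1 w2 = 2*h.
  have := odd_double_half p.
  move: (p./2) => q.
  case: (odd p) => /= Hp.
    have Pq : P = 2 * q%:Z + 1 by rewrite /P -Hp; lia.
    rewrite Pq (_ : 2 * q%:Z + 1 + 2 = 2 * q%:Z + 3); last by ring.
    exact: par_odd.
  have Pq : P = 2 * q%:Z by rewrite /P -Hp; lia.
  rewrite Pq.
  apply: (@par_even _ w0).
  move: Mot; rewrite Pq; lia.
have hC := binC3 p.
exists h.
apply: (@mulfI _ 48) => //.
transitivity (2 * (24 * Sz p.+2)); first ring.
rewrite I.
transitivity ((P+1+1)^+2 * (2 * E (P+1+1) a b)); first ring.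
rewrite E2 Hh.
have hCz : ('C(p.+3, 3))%:Z * 6 = (P+3)*(P+2)*(P+1).
  have := congr1 Posz hC; rewrite PoszM /P; lia.
rewrite PoszM [Posz p.+2]PoszS PoszS -/P.
transitivity (8 * (P+2) * (('C(p.+3, 3))%:Z * 6) * h); last ring.
rewrite hCz; ring.
Qed.

Local Close Scope ring_scope.

Theorem theorem1p2 (n : nat) : 0 < n ->
  (n ^ 2 * (n ^ 2 - 1)) %/ 6 %|
    \sum_(0 <= k < n) k * (k + 1) * (8 * k + 9) * T k * T k.+1.
Proof.
case: n => [//|[|p]] _.
  by rewrite big_nat1.
have [h Hh] := main_p p.
have Dd : ((p.+2 ^ 2 * (p.+2 ^ 2 - 1)) %/ 6 = p.+2 * 'C(p.+3, 3))%N.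
  have hC := binC3 p.
  have -> : (p.+2 ^ 2 * (p.+2 ^ 2 - 1) = (p.+2 * 'C(p.+3, 3)) * 6)%N.
    rewrite -mulnA hC; nia.
  by rewrite mulnK.
rewrite Dd.
have Sz_eq : Sz p.+2 = Posz (\sum_(0 <= k < p.+2) k * (k + 1) * (8 * k + 9) * T k * T k.+1).
  rewrite /Sz (big_morph Posz PoszD (erefl _)); apply: eq_bigr => k _.
  rewrite /t; lia.
have Hd : (Posz (p.+2 * 'C(p.+3, 3)) %| Posz (\sum_(0 <= k < p.+2) k * (k + 1) * (8 * k + 9) * T k * T k.+1))%Z.
  apply/dvdzP; exists h; by rewrite -Sz_eq Hh GRing.mulrC.
exact: Hd.
Qed.
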